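(* Let $V$ be a linear subspace of $\mathbb{R}^m$ with $\dim V=l$, let $\{v_1,\dots,v_l\}$ be a basis of $V$ extended to a basis $\{v_1,\dots,v_l,\dots,v_m\}$ of $\mathbb{R}^m$. Let $\varphi:V\to\mathbb{R}^m$ be a linear map with $\varphi(x)\ne x$ for every nonzero $x\in V$, whose $m\times l$ matrix with respect to these bases (the $j$-th column giving the coordinates of $\varphi(v_j)$ in the basis $v_1,\dots,v_m$) has the form $\begin{bmatrix} J\\ *\end{bmatrix}$, where $J$ is an $l\times l$ block diagonal matrix all of whose diagonal blocks are of one single type $i_0$, with $i_0\in\{1,5,6\}$. Then there exists a linear subspace $V'\subseteq V$ with $\dim V'\ge l/3$, $\varphi(V')\cap V'=\{0\}$, and $\varphi$ injective on $V'$.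
   Context: For a positive integer $k$ and $a\in\mathbb{R}$, $J_k(a)$ is the $k\times k$ Jordan block with $a$ on the diagonal, $1$ on the superdiagonal, and $0$ elsewhere. For a positive integer $s$ and $a,b\in\mathbb{R}$ with $b\ne0$, $C_s(a,b)$ is the $2s\times 2s$ block upper-triangular matrix whose diagonal $2\times2$ blocks are all $\begin{bmatrix} a&b\\-b&a\end{bmatrix}$, whose $2\times 2$ blocks immediately above the diagonal blocks are the $2\times 2$ identity matrix, and which is zero elsewhere. Block types: Type 1 is $J_1(1)$; Type 5 is $J_k(a)$ with $k>1$ (any $a\in\mathbb{R}$); Type 6 is $C_s(a,b)$ with $b\neq 0$ (any $s\ge1$, $a\in\mathbb{R}$). *)

(* Defs.v *)
From HB Require Import structures.
From mathcomp Require Import all_boot all_order all_algebra.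
From mathcomp Require Import reals.
From Stdlib Require List.
Set Implicit Arguments. Unset Strict Implicit. Unset Printing Implicit Defensive.
Import Order.TTheory GRing.Theory Num.Theory.
Local Open Scope ring_scope.

(* Conventions: vectors of R^m are row vectors 'rV_m, with m = l + k.
   A basis v_1..v_m of R^m is the list of rows of an invertible matrix
   B : 'M_(l+k); V is spanned by the first l rows, i.e. V = usubmx B.
   Matrix entries are indexed from 0. *)

Section Defs.
Variable R : realType.

Definition jordan_fun (a : R) (i j : nat) : R :=
  if (i == j)%N then a else if (j == i.+1)%N then 1 else 0.

(* Entries (0-indexed) of C_s(a,b): 2x2 diagonal blocks [[a,b],[-b,a]],
   2x2 identity blocks immediately above the diagonal blocks, 0 elsewhere. *)
Definition cblock_fun (a b : R) (i j : nat) : R :=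
  let p := (i %/ 2)%N in let q := (j %/ 2)%N in
  let r := (i %% 2)%N in let c := (j %% 2)%N in
  if p == q then (if r == c then a else if r == 0%N then b else - b)
  else if q == p.+1 then (if r == c then 1 else 0)
  else 0.

Fixpoint blockdiag_fun (bs : seq (nat * (nat -> nat -> R))) (i j : nat) : R :=
  match bs with
  | [::] => 0
  | (n, f) :: bs' =>
      if ((i < n) && (j < n))%N then f i j
      else if ((n <= i) && (n <= j))%N then blockdiag_fun bs' (i - n) (j - n)
      else 0
  end.

Definition type_block (t : nat) (n : nat) (f : nat -> nat -> R) : Prop :=
  [\/ [/\ t = 1%N, n = 1%N & f = jordan_fun 1],
      [/\ t = 5%N, (1 < n)%N & exists a : R, f = jordan_fun a]
    | [/\ t = 6%N & exists (s : nat) (a b : R),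
          [/\ (0 < s)%N, b != 0, n = (2 * s)%N & f = cblock_fun a b]]].

Definition one_type_blockdiag (l : nat) (t : nat) (J : 'M[R]_l) : Prop :=
  exists bs : seq (nat * (nat -> nat -> R)),
    [/\ forall p, Stdlib.Lists.List.In p bs -> type_block t p.1 p.2,
        sumn (map fst bs) = l &
        J = \matrix_(i < l, j < l) blockdiag_fun bs i j].

(* The linear map phi : V -> R^m whose m x l matrix w.r.t. the bases
   (v_1..v_l of V, v_1..v_m of R^m; rows of B) is M, i.e.
   phi(v_j) = sum_i M i j v_i.  For x in V with coordinates c (the first l
   coordinates of x in the basis B), phi x = sum_j c_j phi(v_j). *)
Definition phi (l k : nat) (B : 'M[R]_(l + k)) (M : 'M[R]_(l + k, l))
    (x : 'rV[R]_(l + k)) : 'rV[R]_(l + k) :=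
  let c : 'rV[R]_l := lsubmx (x *m invmx B) in
  c *m M^T *m B.

End Defs.

(* Main.v *)
Require Import Defs.
From HB Require Import structures.
From mathcomp Require Import all_boot all_order all_algebra.
From mathcomp Require Import reals.
From mathcomp Require Import zify.
Import Order.TTheory GRing.Theory Num.Theory.
Local Open Scope ring_scope.

Section Comb.
Variable R : realType.

Definition Good (L : nat) (f : nat -> nat -> R) (sel : nat -> bool) :=
  (L <= 3 * count sel (iota 0 L))%N /\
  forall j, (j < L)%N -> sel j -> exists i, [/\ (i < L)%N, ~~ sel i, f i j != 0 &
     forall j', (j' < L)%N -> sel j' -> j' != j -> f i j' = 0].

Lemma Good_cons n f1 s1 bs s2 :
  Good n f1 s1 -> Good (sumn (map fst bs)) (blockdiag_fun bs) s2 ->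
  Good (sumn (map fst ((n, f1) :: bs))) (blockdiag_fun ((n, f1) :: bs))
     (fun j => if (j < n)%N then s1 j else s2 (j - n)%N).
Proof.
set L := sumn _. move=> [c1 w1] [c2 w2] /=; split.
  rewrite iotaD count_cat.
  have -> : iota (0 + n) L = map (addn n) (iota 0 L) by rewrite add0n -{1}(addn0 n) iotaDl.
  rewrite count_map.
  have -> : count (fun j => if (j < n)%N then s1 j else s2 (j - n)%N) (iota 0 n)
      = count s1 (iota 0 n).
    by apply: eq_in_count => x; rewrite mem_iota add0n => /andP[_ ->].
  have -> : count (preim (addn n) (fun j => if (j < n)%N then s1 j else s2 (j - n)%N))
      (iota 0 L) = count s2 (iota 0 L).
    apply: eq_count => x /=. have -> : (n + x < n)%N = false by lia.
    by rewrite addKn.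
  lia.
move=> j jlt.
case: (ltnP j n) => jn.
  move=> /(w1 _ jn) [i [ilt isel fij fz]].
  exists i; split.
  - lia.
  - by rewrite ilt.
  - by rewrite ilt /=.
  - move=> j' j'lt; case: (ltnP j' n) => j'n.
      by move=> sj' nj; rewrite ilt /=; apply: fz.
    move=> _ _; rewrite ilt /=; have -> : (n <= i)%N = false by lia. done.
move=> sj.
have jL : (j - n < L)%N by lia.
have [i' [ilt isel fij fz]] := w2 _ jL sj.
exists (n + i')%N; split.
- lia.
- have -> : (n + i' < n)%N = false by lia. by rewrite addKn.
- have -> : (n + i' < n)%N = false by lia. by rewrite /= leq_addr /= addKn.
- move=> j' j'lt; case: (ltnP j' n) => j'n.
    move=> _ _; have -> : (n + i' < n)%N = false by lia.
    by rewrite /= andbF.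
  move=> sj' nj. have -> : (n + i' < n)%N = false by lia.
  rewrite /= leq_addr /= addKn. apply: fz => //; first lia.
  apply/eqP => e; move/eqP: nj; apply; lia.
Qed.

Lemma Good_list bs :
  (forall p, List.In p bs -> exists s, Good p.1 p.2 s) ->
  exists s, Good (sumn (map fst bs)) (blockdiag_fun bs) s.
Proof.
elim: bs => [|[n f] bs IH] H.
  exists xpred0; split => //=.
have [s2 G2] : exists s, Good (sumn (map fst bs)) (blockdiag_fun bs) s.
  by apply: IH => p Hp; apply: H; right.
have [s1 G1] := H (n, f) (or_introl erefl).
by eexists; apply: Good_cons G1 G2.
Qed.

Lemma count_odd_iota n : count (fun j => j %% 2 == 1)%N (iota 0 n) = (n %/ 2)%N.
Proof.
elim: n => // n IH.
have -> : iota 0 n.+1 = iota 0 n ++ [:: n] by rewrite -addn1 iotaD.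
rewrite count_cat IH /= addn0.
case: eqP => h; lia.
Qed.

Lemma Good_jordan n (a : R) : (1 < n)%N -> Good n (jordan_fun a) (fun j => j %% 2 == 1)%N.
Proof.
move=> n1; split; first by rewrite count_odd_iota; lia.
move=> j jn /eqP sj; exists j.-1; split.
- lia.
- apply/eqP; lia.
- rewrite /jordan_fun; have -> : (j.-1 == j) = false by apply/eqP; lia.
  have -> : (j == j.-1.+1) = true by apply/eqP; lia. exact: oner_neq0.
- move=> j' _ /eqP sj' /eqP nj; rewrite /jordan_fun.
  have -> : (j.-1 == j') = false by apply/eqP; lia.
  have -> : (j' == j.-1.+1) = false by apply/eqP; lia. done.
Qed.

Lemma Good_cblock s (a b : R) : (0 < s)%N -> b != 0 ->
  Good (2 * s) (cblock_fun a b) (fun j => j %% 2 == 0)%N.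
Proof.
move=> s0 b0; split.
  have := count_predC (fun j => j %% 2 == 1)%N (iota 0 (2 * s)).
  rewrite count_odd_iota size_iota.
  have -> : count (predC (fun j => j %% 2 == 1)%N) (iota 0 (2 * s)) =
            count (fun j => j %% 2 == 0)%N (iota 0 (2 * s)).
    apply: eq_count => x /=; case: eqP; case: eqP => //; lia.
  lia.
move=> j jn /eqP sj; exists j.+1; split.
- lia.
- apply/eqP; lia.
- rewrite /cblock_fun.
  have -> : (j.+1 %/ 2 == j %/ 2)%N = true by apply/eqP; lia.
  have -> : (j.+1 %% 2 == j %% 2)%N = false by apply/eqP; lia.
  have -> : (j.+1 %% 2 == 0)%N = false by apply/eqP; lia.
  by rewrite oppr_eq0.
- move=> j' _ /eqP sj' /eqP nj; rewrite /cblock_fun.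
  have -> : (j.+1 %/ 2 == j' %/ 2)%N = false by apply/eqP; lia.
  have -> : (j.+1 %% 2 == j' %% 2)%N = false by apply/eqP; lia.
  by case: ifP.
Qed.

Lemma blockdiag_one bs :
  (forall p, List.In p bs -> @type_block R 1 p.1 p.2) ->
  forall i j, (i < sumn (map fst bs))%N -> (j < sumn (map fst bs))%N ->
  blockdiag_fun bs i j = (i == j)%:R.
Proof.
elim: bs => [|[n f] bs IH] H i j //=.
move: (H (n, f) (or_introl erefl)) => /= [[_ En Ef]|[]|[]] //. subst n f.
move=> il jl.
case: i il => [|i] il; case: j jl => [|j] jl //=.
- rewrite !subn1 /= eqSS. apply: IH; [by move=> p Hp; apply: H; right|lia|lia].
Qed.
End Comb.

Section Mx.
Variable R : realType.
Variables (l k : nat) (B : 'M[R]_(l + k)) (M : 'M[R]_(l + k, l)).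
Hypothesis Bu : B \in unitmx.

Lemma uB m (c : 'M[R]_(m, l)) : c *m usubmx B = row_mx c 0 *m B.
Proof. by rewrite -{2}(vsubmxK B) mul_row_col mul0mx addr0. Qed.

Lemma phiE (c : 'rV[R]_l) : phi B M (c *m usubmx B) =
  c *m (usubmx M)^T *m usubmx B + c *m (dsubmx M)^T *m dsubmx B.
Proof.
rewrite /phi uB mulmxK // row_mxKl -{1}(vsubmxK M) tr_col_mx mul_mx_row.
by rewrite -mul_row_col vsubmxK.
Qed.

Lemma uniq0 (c : 'rV[R]_l) (y : 'rV[R]_k) :
  c *m usubmx B + y *m dsubmx B = 0 -> c = 0 /\ y = 0.
Proof.
rewrite -mul_row_col vsubmxK => h.
have : row_mx c y = 0 by rewrite -(mulmxK Bu (row_mx c y)) h mul0mx.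
by rewrite -row_mx0 => /eq_row_mx.
Qed.

Lemma core m (W : 'M[R]_(m, l)) :
  (forall c : 'rV_l, (c <= W)%MS -> (c *m (usubmx M)^T <= W)%MS ->
     c *m (dsubmx M)^T = 0 -> c = 0) ->
  exists V' : 'M[R]_(l + k),
    [/\ (V' <= usubmx B)%MS,
        \rank V' = \rank W,
        (forall x : 'rV[R]_(l + k), (x <= V')%MS -> (phi B M x <= V')%MS ->
            phi B M x = 0) &
        (forall x y : 'rV[R]_(l + k), (x <= V')%MS -> (y <= V')%MS ->
            phi B M x = phi B M y -> x = y)].
Proof.
move=> H; exists <<W *m usubmx B>>%MS; split.
- by rewrite genmxE; exact: submxMl.
- by rewrite genmxE uB mxrankMfree ?row_free_unit // rank_row_mx0.
- move=> x; rewrite !genmxE => /submxP[e ->] /submxP[e' he'].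
  move: he'; rewrite !mulmxA phiE => he'.
  set c := e *m W.
  have : (c *m (usubmx M)^T - e' *m W) *m usubmx B + c *m (dsubmx M)^T *m dsubmx B = 0.
    by rewrite mulmxBl addrAC he' subrr.
  move=> /uniq0 [/eqP h1 h2].
  have c0 : c = 0.
    apply: H => //; first exact: submxMl.
    by move: h1; rewrite subr_eq0 => /eqP ->; exact: submxMl.
  by rewrite c0 !mul0mx addr0.
- move=> x y; rewrite !genmxE => /submxP[e ->] /submxP[e2 ->].
  rewrite !mulmxA !phiE => h.
  set c := (e - e2) *m W.
  have : c *m (usubmx M)^T *m usubmx B + c *m (dsubmx M)^T *m dsubmx B = 0.
    by rewrite /c !mulmxBl addrACA -opprD h subrr.
  move=> /uniq0 [h1 h2].
  have c0 : c = 0.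
    by apply: H => //; [exact: submxMl | rewrite h1 sub0mx].
  apply/eqP; rewrite -subr_eq0 -!mulmxBl. by rewrite -/c c0 mul0mx.
Qed.
End Mx.

Section Sel.
Variable R : realType.
Variables (l : nat) (sel : nat -> bool).

Definition Wsel : 'M[R]_(#|[set i : 'I_l | sel i]|, l) :=
  \matrix_(r, j) ((enum_val r == j)%:R).

Lemma Wsel_rank : \rank Wsel = #|[set i : 'I_l | sel i]|.
Proof.
apply/eqP; apply/row_freeP; exists Wsel^T; apply/matrixP => r r'.
rewrite !mxE (bigD1 (enum_val r)) //= big1 ?addr0.
  rewrite !mxE eqxx mul1r; congr (_ %:R).
  by rewrite eq_sym (inj_eq enum_val_inj).
move=> j /negbTE nj; rewrite !mxE eq_sym nj mul0r //.
Qed.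

Lemma Wsel_zero (c : 'rV[R]_l) : (c <= Wsel)%MS -> forall i : 'I_l, ~~ sel i -> c ord0 i = 0.
Proof.
move=> /submxP[e ->] i si; rewrite !mxE big1 // => r _; rewrite mxE.
have := enum_valP r; rewrite inE => h.
have -> : (enum_val r == i) = false by apply: contraNF si => /eqP <-.
by rewrite mulr0.
Qed.

Lemma sel_kill (bs : seq (nat * (nat -> nat -> R))) (c : 'rV[R]_l) :
  Good R l (blockdiag_fun bs) sel ->
  (c <= Wsel)%MS ->
  (c *m (\matrix_(i < l, j < l) blockdiag_fun bs i j)^T <= Wsel)%MS -> c = 0.
Proof.
move=> [_ G] cW cJW; apply/matrixP => z j; rewrite ord1 [RHS]mxE.
case sj: (sel j); last exact: (Wsel_zero _ cW j (negbT sj)).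
have [i [ilt si fij fz]] := G j (ltn_ord j) sj.
have := Wsel_zero _ cJW (Ordinal ilt) si.
rewrite !mxE (bigD1 j) //= big1 ?addr0.
  rewrite !mxE /= => /eqP; rewrite mulf_eq0 (negbTE fij) orbF => /eqP //.
move=> j' nj; rewrite !mxE /=.
case sj': (sel j').
  by rewrite fz ?mulr0 // sj'.
by rewrite (Wsel_zero _ cW) ?sj' // mul0r.
Qed.
End Sel.

Lemma cardsel l (sel : nat -> bool) : #|[set i : 'I_l | sel i]| = count sel (iota 0 l).
Proof.
rewrite cardsE cardE /enum_mem size_filter -enumT -val_enum_ord count_map.
by apply: eq_count.
Qed.

Theorem lemma3p3 (R : realType) (l k : nat) (B : 'M[R]_(l + k))
    (M : 'M[R]_(l + k, l)) (J : 'M[R]_l) (i0 : nat) :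
  B \in unitmx ->
  i0 \in [:: 1%N; 5%N; 6%N] ->
  usubmx M = J ->
  one_type_blockdiag i0 J ->
  (forall x : 'rV[R]_(l + k), (x <= usubmx B)%MS -> x != 0 -> phi B M x != x) ->
  exists V' : 'M[R]_(l + k),
    [/\ (V' <= usubmx B)%MS,
        (l <= 3 * \rank V')%N,
        (forall x : 'rV[R]_(l + k), (x <= V')%MS -> (phi B M x <= V')%MS ->
            phi B M x = 0) &
        (forall x y : 'rV[R]_(l + k), (x <= V')%MS -> (y <= V')%MS ->
            phi B M x = phi B M y -> x = y)].
Proof.
move=> Bu i0in UJ [bs [Hbs Hsum HJ]] Hfix.
have main : forall m (W : 'M[R]_(m, l)), (l <= 3 * \rank W)%N ->
  (forall c : 'rV_l, (c <= W)%MS -> (c *m (usubmx M)^T <= W)%MS ->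
     c *m (dsubmx M)^T = 0 -> c = 0) ->
  exists V' : 'M[R]_(l + k),
    [/\ (V' <= usubmx B)%MS,
        (l <= 3 * \rank V')%N,
        (forall x : 'rV[R]_(l + k), (x <= V')%MS -> (phi B M x <= V')%MS ->
            phi B M x = 0) &
        (forall x y : 'rV[R]_(l + k), (x <= V')%MS -> (y <= V')%MS ->
            phi B M x = phi B M y -> x = y)].
  move=> m W hr H; have [V' [h1 h2 h3 h4]] := @core R l k B M Bu _ W H.
  by exists V'; split => //; rewrite h2.
have selcase : (exists s, Good R l (blockdiag_fun bs) s) -> exists V' : 'M[R]_(l + k),
    [/\ (V' <= usubmx B)%MS,
        (l <= 3 * \rank V')%N,
        (forall x : 'rV[R]_(l + k), (x <= V')%MS -> (phi B M x <= V')%MS ->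
            phi B M x = 0) &
        (forall x y : 'rV[R]_(l + k), (x <= V')%MS -> (y <= V')%MS ->
            phi B M x = phi B M y -> x = y)].
  move=> [s Gs]; apply: (main _ (Wsel R l s)).
    by rewrite Wsel_rank cardsel; case: Gs.
  move=> c cW cJW _; apply: (@sel_kill R l s bs c Gs cW).
  by rewrite -HJ -UJ.
move: i0in; rewrite !inE => /or3P [/eqP E|/eqP E|/eqP E]; subst i0.
- apply: (main _ 1%:M); first by rewrite mxrank1; lia.
  move=> c _ _ cN.
  have J1 : J = 1%:M.
    rewrite HJ; apply/matrixP => i j; rewrite !mxE.
    by apply: blockdiag_one => //; rewrite Hsum.
  apply/eqP; apply: contraT => cn0.
  have xn0 : c *m usubmx B != 0.
    apply: contra cn0 => /eqP h.
    by have [-> _] := @uniq0 R l k B Bu c 0 ltac:(by rewrite mul0mx addr0).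
  have := Hfix _ (submxMl _ _) xn0.
  by rewrite phiE // cN mul0mx addr0 UJ J1 trmx1 mulmx1 eqxx.
- apply: selcase; rewrite -Hsum; apply: Good_list => p /Hbs.
  move=> [[]|[_ n1 [a ->]]|[]] //.
  by eexists; apply: Good_jordan.
- apply: selcase; rewrite -Hsum; apply: Good_list => p /Hbs.
  move=> [[]|[]|[_ [s [a [b [s0 b0 -> ->]]]]]] //.
  by eexists; apply: Good_cblock.
Qed.
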